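(* Let $\mathcal C,\mathcal D$ be parsummable categories and $F\colon\mathcal C\to\mathcal D$ a functor of underlying categories that preserves sums. Then: (1) $I\colon\mathcal C\to F_*\mathcal C$ is a morphism of parsummable categories; (2) if $F$ is essentially surjective, then $\hat F\colon F_*\mathcal C\to\mathcal D$ is an equivalence of categories; (3) as ordinary functors, $F=\hat F\circ I$.
   Context: Let $\omega=\{1,2,\dots\}$, $\mathcal M$ the monoid of injections $\omega\to\omega$, $E\mathcal M$ the category with objects $\mathcal M$ and unique morphisms between any two objects. An $E\mathcal M$-category is a small category with a strict $E\mathcal M$-action ($u_*$ the action of $u$, $u^X_\circ\colon X\to u_*X$ the isomorphism from $1\to u$); $\mathrm{supp}(X)$ is the intersection of finite $A\subset\omega$ with $u_*X=X$ for all $u$ fixing $A$ pointwise; tame means all supports finite. A parsummable category is a tame $E\mathcal M$-category with an object $0$ of empty support and a functor $+$ on the full subcategory $\mathcal C\boxtimes\mathcal C$ of disjointly supported pairs, strictly unital, associative, commutative and $E\mathcal M$-equivariant. A morphism of parsummable categories is a strictly $E\mathcal M$-equivariant functor preserving $0$ and $+$ strictly. A functor $F\colon\mathcal C\to\mathcal D$ of underlying categories preserves sums if $F(0)=0$, $F\times F$ maps $\mathcal C\boxtimes\mathcal C$ into $\mathcal D\boxtimes\mathcal D$, and $F$ commutes with $+$ on objects and morphisms. $F_*\mathcal C$ is the parsummable category whose objects are those of $\mathcal C$, with $\mathrm{Hom}_{F_*\mathcal C}(X,Y)=\mathrm{Hom}_{\mathcal D}(FX,FY)$, $\mathcal M$-action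 on objects as in $\mathcal C$, structure isomorphisms $u^X_\circ$ given by $F(u^X_\circ)$, sum of objects as in $\mathcal C$ and sum of morphisms as in $\mathcal D$. $I\colon\mathcal C\to F_*\mathcal C$ is the identity on objects and sends $f\colon X\to Y$ to $F(f)$. $\hat F\colon F_*\mathcal C\to\mathcal D$ is $F$ on objects and the identity on hom-sets. *)

(* Defs.v *)
From Stdlib Require Import List.



(* ---------- the monoid M of injections omega -> omega ----------
   omega = {1,2,...} is encoded as nat via n |-> n-1 (a harmless relabelling). *)
Record Inj := { ifun :> nat -> nat; ifun_inj : forall a b, ifun a = ifun b -> a = b }.

Definition inj_id : Inj := {| ifun := fun n => n; ifun_inj := fun a b e => e |}.

Definition inj_comp (u v : Inj) : Inj :=
  {| ifun := fun n => u (v n);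
     ifun_inj := fun a b e => @ifun_inj v a b (@ifun_inj u (v a) (v b) e) |}.

Record Cat := {
  Ob : Type;
  Hom : Ob -> Ob -> Type;
  idm : forall X, Hom X X;
  comp : forall X Y Z, Hom Y Z -> Hom X Y -> Hom X Z }.
Arguments Hom : clear implicits.
Arguments idm {c} X.
Arguments comp {c X Y Z} g f.

Definition is_category (C : Cat) : Prop :=
  (forall X Y (f : Hom C X Y), comp (idm Y) f = f) /\
  (forall X Y (f : Hom C X Y), comp f (idm X) = f) /\
  (forall W X Y Z (h : Hom C Y Z) (g : Hom C X Y) (f : Hom C W X),
      comp h (comp g f) = comp (comp h g) f).

Definition is_iso {C : Cat} {X Y : Ob C} (f : Hom C X Y) : Prop :=
  exists g : Hom C Y X, comp g f = idm X /\ comp f g = idm Y.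

Definition cast {C : Cat} {X X' Y Y' : Ob C} (e1 : X = X') (e2 : Y = Y')
  (f : Hom C X Y) : Hom C X' Y' :=
  match e1 in _ = X1 return Hom C X1 Y' with
  | eq_refl => match e2 in _ = Y1 return Hom C X Y1 with eq_refl => f end
  end.

Record Functor (C D : Cat) := {
  fob : Ob C -> Ob D;
  fhom : forall X Y, Hom C X Y -> Hom D (fob X) (fob Y) }.
Arguments fob {C D} f X.
Arguments fhom {C D} f {X Y} g.

Definition is_functor {C D : Cat} (F : Functor C D) : Prop :=
  (forall X, fhom F (idm X) = idm (fob F X)) /\
  (forall X Y Z (g : Hom C Y Z) (f : Hom C X Y),
      fhom F (comp g f) = comp (fhom F g) (fhom F f)).

Definition fcomp {C D E : Cat} (G : Functor D E) (F : Functor C D) : Functor C E :=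
  {| fob := fun X => fob G (fob F X);
     fhom := fun X Y f => fhom G (fhom F f) |}.

Definition id_functor (C : Cat) : Functor C C :=
  {| fob := fun X => X; fhom := fun X Y f => f |}.

Definition nat_iso {C D : Cat} (F G : Functor C D) : Prop :=
  exists eta : forall X, Hom D (fob F X) (fob G X),
    (forall X, is_iso (eta X)) /\
    (forall X Y (f : Hom C X Y), comp (eta Y) (fhom F f) = comp (fhom G f) (eta X)).

Definition is_equivalence {C D : Cat} (F : Functor C D) : Prop :=
  is_functor F /\
  exists G : Functor D C, is_functor G /\
    nat_iso (fcomp G F) (id_functor C) /\ nat_iso (fcomp F G) (id_functor D).

Definition ess_surj {C D : Cat} (F : Functor C D) : Prop :=
  forall Y : Ob D, exists X (f : Hom D (fob F X) Y), is_iso f.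

(* ---------- EM-categories ----------
   A strict EM-action is encoded by the M-action on objects (u_* X = act u X)
   together with the structure isomorphisms u_o^X = circ u X : X -> u_* X
   (image of the unique morphism 1 -> u); the action on an arbitrary morphism
   (u -> v, f : X -> Y) is then  circ v Y o f o (circ u X)^{-1}. *)
Record EMCat := {
  ecat :> Cat;
  act : Inj -> Ob ecat -> Ob ecat;
  circ : forall u X, Hom ecat X (act u X) }.

Arguments act : clear implicits.
Arguments circ : clear implicits.

Definition is_EM (C : EMCat) : Prop :=
  (forall X, act C inj_id X = X) /\
  (forall u v X, act C u (act C v X) = act C (inj_comp u v) X) /\
  (forall u X, is_iso (circ C u X)) /\
  (forall X (e : act C inj_id X = X), cast eq_refl e (circ C inj_id X) = idm X) /\
  (forall u v X (e : act C u (act C v X) = act C (inj_comp u v) X),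
      circ C (inj_comp u v) X = cast eq_refl e (comp (circ C u (act C v X)) (circ C v X))).

Definition supports (C : EMCat) (A : list nat) (X : Ob C) : Prop :=
  forall u : Inj, (forall a, In a A -> u a = a) -> act C u X = X.

Definition in_supp (C : EMCat) (X : Ob C) (n : nat) : Prop :=
  forall A : list nat, supports C A X -> In n A.

Definition tame (C : EMCat) : Prop :=
  forall X : Ob C, exists s : list nat, forall n, in_supp C X n -> In n s.

Definition disj (C : EMCat) (X Y : Ob C) : Prop :=
  forall n, in_supp C X n -> in_supp C Y n -> False.

(* ---------- parsummable categories ----------
   The sum on objects is a total function whose values are only constrained on
   disjointly supported pairs; the sum of morphisms requires disjointness proofs
   (it is a functor on the full subcategory C [x] C of disjointly supported pairs). *)
Record PCat := {
  pem :> EMCat;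
  zero : Ob pem;
  add : Ob pem -> Ob pem -> Ob pem;
  addh : forall X Y X' Y', disj pem X Y -> disj pem X' Y' ->
         Hom pem X X' -> Hom pem Y Y' -> Hom pem (add X Y) (add X' Y') }.
Arguments zero {p}.
Arguments add {p} X Y.
Arguments addh {p X Y X' Y'} d d' f g.

Definition is_parsummable (C : PCat) : Prop :=
  is_category C /\ is_EM C /\ tame C /\
  (forall n, ~ in_supp C zero n) /\
  (forall X Y (d : disj C X Y), addh d d (idm X) (idm Y) = idm (add X Y)) /\
  (forall X Y X' Y' X'' Y'' (d : disj C X Y) (d' : disj C X' Y') (d'' : disj C X'' Y'')
     (f : Hom C X X') (f' : Hom C X' X'') (g : Hom C Y Y') (g' : Hom C Y' Y''),
      addh d d'' (comp f' f) (comp g' g) = comp (addh d' d'' f' g') (addh d d' f g)) /\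
  (forall X, disj C X zero -> add X zero = X) /\
  (forall X, disj C zero X -> add zero X = X) /\
  (forall X X' (d : disj C X zero) (d' : disj C X' zero) (f : Hom C X X')
     (e1 : add X zero = X) (e2 : add X' zero = X'),
      cast e1 e2 (addh d d' f (idm zero)) = f) /\
  (forall X X' (d : disj C zero X) (d' : disj C zero X') (f : Hom C X X')
     (e1 : add zero X = X) (e2 : add zero X' = X'),
      cast e1 e2 (addh d d' (idm zero) f) = f) /\
  (forall X Y Z, disj C X Y -> disj C Y Z -> disj C X Z ->
      add (add X Y) Z = add X (add Y Z)) /\
  (forall X Y Z X' Y' Z'
     (dXY : disj C X Y) (dYZ : disj C Y Z) (dXZ : disj C X Z)
     (dXY' : disj C X' Y') (dYZ' : disj C Y' Z') (dXZ' : disj C X' Z')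
     (d1 : disj C (add X Y) Z) (d1' : disj C (add X' Y') Z')
     (d2 : disj C X (add Y Z)) (d2' : disj C X' (add Y' Z'))
     (f : Hom C X X') (g : Hom C Y Y') (h : Hom C Z Z')
     (e1 : add (add X Y) Z = add X (add Y Z)) (e2 : add (add X' Y') Z' = add X' (add Y' Z')),
      cast e1 e2 (addh d1 d1' (addh dXY dXY' f g) h) = addh d2 d2' f (addh dYZ dYZ' g h)) /\
  (forall X Y, disj C X Y -> add X Y = add Y X) /\
  (forall X Y X' Y' (d : disj C X Y) (d' : disj C X' Y') (r : disj C Y X) (r' : disj C Y' X')
     (f : Hom C X X') (g : Hom C Y Y') (e1 : add X Y = add Y X) (e2 : add X' Y' = add Y' X'),
      cast e1 e2 (addh d d' f g) = addh r r' g f) /\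
  (forall u X Y, disj C X Y -> act C u (add X Y) = add (act C u X) (act C u Y)) /\
  (forall u X Y (d : disj C X Y) (du : disj C (act C u X) (act C u Y))
     (e : act C u (add X Y) = add (act C u X) (act C u Y)),
      cast eq_refl e (circ C u (add X Y)) = addh d du (circ C u X) (circ C u Y)).

Definition is_pmorphism {C D : PCat} (G : Functor C D) : Prop :=
  is_functor G /\
  (forall u X, fob G (act C u X) = act D u (fob G X)) /\
  (forall u X (e : fob G (act C u X) = act D u (fob G X)),
      cast eq_refl e (fhom G (circ C u X)) = circ D u (fob G X)) /\
  fob G zero = zero /\
  (forall X Y, disj C X Y -> disj D (fob G X) (fob G Y)) /\
  (forall X Y, disj C X Y -> fob G (add X Y) = add (fob G X) (fob G Y)) /\
  (forall X Y X' Y' (d : disj C X Y) (d' : disj C X' Y')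
     (dG : disj D (fob G X) (fob G Y)) (dG' : disj D (fob G X') (fob G Y'))
     (f : Hom C X X') (g : Hom C Y Y')
     (e1 : fob G (add X Y) = add (fob G X) (fob G Y))
     (e2 : fob G (add X' Y') = add (fob G X') (fob G Y')),
      cast e1 e2 (fhom G (addh d d' f g)) = addh dG dG' (fhom G f) (fhom G g)).

Record preserves_sums {C D : PCat} (F : Functor C D) : Prop := {
  ps_zero : fob F zero = zero;
  ps_disj : forall X Y, disj C X Y -> disj D (fob F X) (fob F Y);
  ps_add : forall X Y, disj C X Y -> fob F (add X Y) = add (fob F X) (fob F Y);
  ps_addh : forall X Y X' Y' (d : disj C X Y) (d' : disj C X' Y')
     (f : Hom C X X') (g : Hom C Y Y')
     (e1 : fob F (add X Y) = add (fob F X) (fob F Y))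
     (e2 : fob F (add X' Y') = add (fob F X') (fob F Y')),
      cast e1 e2 (fhom F (addh d d' f g)) = addh (ps_disj _ _ d) (ps_disj _ _ d') (fhom F f) (fhom F g) }.

Section Fstar.
Variables (C D : PCat) (F : Functor C D) (HS : preserves_sums F).

Definition FstarCat : Cat :=
  {| Ob := Ob C;
     Hom := fun X Y => Hom D (fob F X) (fob F Y);
     idm := fun X => idm (fob F X);
     comp := fun X Y Z g f => comp g f |}.

Definition FstarEM : EMCat :=
  {| ecat := FstarCat;
     act := act C;
     circ := fun u X => fhom F (circ C u X) |}.

Definition FstarC : PCat :=
  {| pem := FstarEM;
     zero := @zero C;
     add := @add C;
     addh := fun X Y X' Y' (d : disj C X Y) (d' : disj C X' Y') f g =>
       cast (eq_sym (ps_add _ HS _ _ d)) (eq_sym (ps_add _ HS _ _ d'))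
            (addh (ps_disj _ HS _ _ d) (ps_disj _ HS _ _ d') f g) |}.

Definition Ifun : Functor C FstarC :=
  @Build_Functor C FstarC (fun X : Ob C => (X : Ob FstarC))
    (fun X Y (f : Hom C X Y) => (fhom F f : Hom FstarC X Y)).

Definition Fhat : Functor FstarC D :=
  @Build_Functor FstarC D (fun X : Ob FstarC => fob F X)
    (fun X Y (f : Hom FstarC X Y) => (f : Hom D (fob F X) (fob F Y))).
End Fstar.

Arguments FstarCat {C D} F.
Arguments FstarEM {C D} F.
Arguments FstarC {C D F} HS.
Arguments Ifun {C D F} HS.
Arguments Fhat {C D F} HS.

(* Main.v *)
Require Import Defs.
From Stdlib Require Import ProofIrrelevance ClassicalEpsilon.
From Stdlib Require Import Eqdep.

Definition pk {C : Cat} {A B : Ob C} (f : Hom C A B) :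
  {A : Ob C & {B : Ob C & Hom C A B}} := existT _ A (existT _ B f).

Lemma pk_cast {C : Cat} {A A1 B B1 : Ob C} (p : A = A1) (q : B = B1) (f : Hom C A B) :
  pk (cast p q f) = pk f.
Proof. destruct p, q; reflexivity. Qed.

Lemma pk_to_cast {C : Cat} {A A1 B B1 : Ob C} (p : A = A1) (q : B = B1)
  (f : Hom C A B) (g : Hom C A1 B1) : pk f = pk g -> cast p q f = g.
Proof.
  destruct p, q; simpl; unfold pk; intro H.
  apply EqdepTheory.inj_pair2 in H. apply EqdepTheory.inj_pair2 in H. exact H.
Qed.

Lemma pk_to_eq {C : Cat} {A B : Ob C} (f g : Hom C A B) : pk f = pk g -> f = g.
Proof. intro H. apply (pk_to_cast eq_refl eq_refl f g H). Qed.

Lemma pk_inv {C : Cat} {A A2 B B2 : Ob C} (f : Hom C A B) (g : Hom C A2 B2) :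
  pk f = pk g -> exists (p : A = A2) (q : B = B2), cast p q f = g.
Proof.
  unfold pk; intro H. inversion H. subst.
  exists eq_refl, eq_refl. simpl.
  apply EqdepTheory.inj_pair2 in H. apply EqdepTheory.inj_pair2 in H. exact H.
Qed.

Lemma pk_addh (D : PCat) {A B A' B' A2 B2 A2' B2' : Ob D}
  (d : disj D A B) (d' : disj D A' B') (d2 : disj D A2 B2) (d2' : disj D A2' B2')
  (f : Hom D A A') (g : Hom D B B') (f2 : Hom D A2 A2') (g2 : Hom D B2 B2') :
  pk f = pk f2 -> pk g = pk g2 -> pk (addh d d' f g) = pk (addh d2 d2' f2 g2).
Proof.
  intros H1 H2.
  destruct (pk_inv _ _ H1) as [p [q E1]].
  destruct (pk_inv _ _ H2) as [r [s E2]].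
  subst. simpl.
  rewrite (proof_irrelevance _ d2 d), (proof_irrelevance _ d2' d'). reflexivity.
Qed.

Lemma cast_refl {C : Cat} {A B : Ob C} (p : A = A) (q : B = B) (f : Hom C A B) :
  cast p q f = f.
Proof. rewrite (proof_irrelevance _ p eq_refl), (proof_irrelevance _ q eq_refl). reflexivity. Qed.

Lemma idm_cast {C : Cat} {A A1 : Ob C} (p : A = A1) : cast p p (idm A) = idm A1.
Proof. destruct p; reflexivity. Qed.

Lemma comp_cast {C : Cat} {A A1 B B1 E E1 : Ob C} (p : A = A1) (q q' : B = B1) (r : E = E1)
  (g : Hom C B E) (f : Hom C A B) :
  comp (cast q r g) (cast p q' f) = cast p r (comp g f).
Proof. rewrite (proof_irrelevance _ q' q). destruct p, q, r. reflexivity. Qed.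

Lemma fhom_cast {C D : Cat} (F : Functor C D) {X X' Y Y' : Ob C} (e1 : X = X') (e2 : Y = Y')
  (f : Hom C X Y) :
  fhom F (cast e1 e2 f) = cast (f_equal (fob F) e1) (f_equal (fob F) e2) (fhom F f).
Proof. destruct e1, e2. reflexivity. Qed.

Lemma castF {C D : PCat} {F : Functor C D} (HS : preserves_sums F) {X X' Y Y' : Ob C}
  (e1 : X = X') (e2 : Y = Y') (f : Hom D (fob F X) (fob F Y)) :
  @cast (FstarC HS) X X' Y Y' e1 e2 f =
  @cast D _ _ _ _ (f_equal (fob F) e1) (f_equal (fob F) e2) f.
Proof. destruct e1, e2. reflexivity. Qed.

Lemma pk_fhom {C D : Cat} (F : Functor C D) {X X' Y Y' : Ob C} (f : Hom C X Y) (g : Hom C X' Y') :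
  pk f = pk g -> pk (fhom F f) = pk (fhom F g).
Proof.
  intro H. destruct (pk_inv _ _ H) as [p [q E]]. subst. rewrite fhom_cast, pk_cast. reflexivity.
Qed.

Lemma iso_fhom {C D : Cat} (F : Functor C D) (HF : is_functor F) {X Y : Ob C} (f : Hom C X Y) :
  is_iso f -> is_iso (fhom F f).
Proof.
  destruct HF as [Hid Hc]. intros [g [H1 H2]]. exists (fhom F g).
  rewrite <- !Hc, H1, H2, !Hid. split; reflexivity.
Qed.

Lemma ru_pk (D : PCat) (HD : is_parsummable D) {A A' Z : Ob D} (hz : Z = zero)
  (d : disj D A Z) (d' : disj D A' Z) (f : Hom D A A') : pk (addh d d' f (idm Z)) = pk f.
Proof.
  subst. destruct HD as [_ [_ [_ [_ [_ [_ [ruD [luD [ruhD _]]]]]]]]].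
  rewrite <- (pk_cast (ruD A d) (ruD A' d')), ruhD. reflexivity.
Qed.

Lemma lu_pk (D : PCat) (HD : is_parsummable D) {A A' Z : Ob D} (hz : Z = zero)
  (d : disj D Z A) (d' : disj D Z A') (f : Hom D A A') : pk (addh d d' (idm Z) f) = pk f.
Proof.
  subst. destruct HD as [_ [_ [_ [_ [_ [_ [ruD [luD [ruhD [luhD _]]]]]]]]]].
  rewrite <- (pk_cast (luD A d) (luD A' d')), luhD. reflexivity.
Qed.

Lemma as_pk (D : PCat) (HD : is_parsummable D) (X Y Z X' Y' Z' : Ob D)
  (dXY : disj D X Y) (dYZ : disj D Y Z) (dXZ : disj D X Z)
  (dXY' : disj D X' Y') (dYZ' : disj D Y' Z') (dXZ' : disj D X' Z')
  (d1 : disj D (add X Y) Z) (d1' : disj D (add X' Y') Z')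
  (d2 : disj D X (add Y Z)) (d2' : disj D X' (add Y' Z'))
  (f : Hom D X X') (g : Hom D Y Y') (h : Hom D Z Z') :
  pk (addh d1 d1' (addh dXY dXY' f g) h) = pk (addh d2 d2' f (addh dYZ dYZ' g h)).
Proof.
  destruct HD as [_ [_ [_ [_ [_ [_ [_ [_ [_ [_ [asD [ashD _]]]]]]]]]]]].
  rewrite <- (pk_cast (asD X Y Z dXY dYZ dXZ) (asD X' Y' Z' dXY' dYZ' dXZ')).
  rewrite (ashD X Y Z X' Y' Z' dXY dYZ dXZ dXY' dYZ' dXZ' d1 d1' d2 d2' f g h). reflexivity.
Qed.

Lemma cm_pk (D : PCat) (HD : is_parsummable D) (X Y X' Y' : Ob D)
  (d : disj D X Y) (d' : disj D X' Y') (r : disj D Y X) (r' : disj D Y' X')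
  (f : Hom D X X') (g : Hom D Y Y') : pk (addh d d' f g) = pk (addh r r' g f).
Proof.
  destruct HD as [_ [_ [_ [_ [_ [_ [_ [_ [_ [_ [_ [_ [cmD [cmhD _]]]]]]]]]]]]]].
  rewrite <- (pk_cast (cmD X Y d) (cmD X' Y' d')), (cmhD _ _ _ _ d d' r r'). reflexivity.
Qed.

Theorem lemma3p10 (C D : PCat) (HC : is_parsummable C) (HD : is_parsummable D)
  (F : Functor C D) (HF : is_functor F) (HS : preserves_sums F) :
  is_parsummable (FstarC HS) /\
  is_pmorphism (Ifun HS) /\
  (ess_surj F -> is_equivalence (Fhat HS)) /\
  F = fcomp (Fhat HS) (Ifun HS).
Proof.
  pose proof HD as HD0.
  destruct HC as [catC [emC [tameC [zC [idC [compC [ruC [luC [ruhC [luhC [asC [ashC [cmC [cmhC [eqC eqhC]]]]]]]]]]]]]]].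
  destruct HD as [catD [emD [tameD [zD [idD [compD [ruD [luD [ruhD [luhD [asD [ashD [cmD [cmhD [eqD eqhD]]]]]]]]]]]]]]].
  destruct emC as [actid [actc [circiso [circid circc]]]].
  pose proof HF as HF0.
  destruct HF as [Fid Fc].
  destruct catD as [cl [cr ca]].
  split; [|split; [|split]].
  - split; [|split; [|split; [|split; [|split; [|split; [|split; [|split; [|split; [|split; [|split; [|split; [|split; [|split; [|split]]]]]]]]]]]]]].
    + split; [|split]; intros; simpl; auto.
    + split; [|split; [|split; [|split]]]; intros.
      * apply actid.
      * apply actc.
      * apply (iso_fhom F HF0 (circ C u X)), circiso.
      * rewrite castF. change (circ (FstarC HS) inj_id X) with (fhom F (circ C inj_id X)). rewrite <- fhom_cast, circid. apply Fid.
      * rewrite castF. cbn [circ FstarC FstarEM pem]. rewrite (circc u v X e), fhom_cast, Fc. reflexivity.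
    + exact tameC.
    + exact zC.
    + intros. simpl. rewrite idD. apply idm_cast.
    + intros. simpl. rewrite (compD _ _ _ _ _ _ _ (ps_disj F HS _ _ d')). symmetry. apply comp_cast.
    + exact ruC.
    + exact luC.
    + intros X X' d d' f e1 e2. rewrite castF. apply (@pk_to_cast D).
      cbn [addh idm ecat pem FstarC FstarEM FstarCat]. rewrite pk_cast.
      apply (ru_pk D HD0 (ps_zero F HS)).
    + intros X X' d d' f e1 e2. rewrite castF. apply (@pk_to_cast D).
      cbn [addh idm ecat pem FstarC FstarEM FstarCat]. rewrite pk_cast.
      apply (lu_pk D HD0 (ps_zero F HS)).
    + exact asC.
    + intros X Y Z X' Y' Z' dXY dYZ dXZ dXY' dYZ' dXZ' d1 d1' d2 d2' f g h e1 e2.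
      rewrite castF. apply (@pk_to_cast D).
      cbn [addh idm ecat pem FstarC FstarEM FstarCat]. rewrite pk_cast.
      assert (D1 : disj D (add (fob F X) (fob F Y)) (fob F Z))
        by (rewrite <- (ps_add F HS X Y dXY); exact (ps_disj F HS _ _ d1)).
      assert (D1' : disj D (add (fob F X') (fob F Y')) (fob F Z'))
        by (rewrite <- (ps_add F HS X' Y' dXY'); exact (ps_disj F HS _ _ d1')).
      assert (D2 : disj D (fob F X) (add (fob F Y) (fob F Z)))
        by (rewrite <- (ps_add F HS Y Z dYZ); exact (ps_disj F HS _ _ d2)).
      assert (D2' : disj D (fob F X') (add (fob F Y') (fob F Z')))
        by (rewrite <- (ps_add F HS Y' Z' dYZ'); exact (ps_disj F HS _ _ d2')).
      transitivity (pk (addh D1 D1' (addh (ps_disj F HS _ _ dXY) (ps_disj F HS _ _ dXY') f g) h)).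
      { apply pk_addh; [apply pk_cast | reflexivity]. }
      rewrite (as_pk D HD0 _ _ _ _ _ _ (ps_disj F HS _ _ dXY) (ps_disj F HS _ _ dYZ) (ps_disj F HS _ _ dXZ)
                 (ps_disj F HS _ _ dXY') (ps_disj F HS _ _ dYZ') (ps_disj F HS _ _ dXZ') D1 D1' D2 D2').
      rewrite pk_cast. apply pk_addh; [reflexivity | symmetry; apply pk_cast].
    + exact cmC.
    + intros X Y X' Y' d d' r r' f g e1 e2.
      rewrite castF. apply (@pk_to_cast D).
      cbn [addh idm ecat pem FstarC FstarEM FstarCat]. rewrite !pk_cast.
      apply cm_pk; exact HD0.
    + exact eqC.
    + intros u X Y d du e.
      rewrite castF. apply (@pk_to_cast D).
      cbn [addh circ idm ecat pem FstarC FstarEM FstarCat]. rewrite !pk_cast.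
      transitivity (pk (fhom F (@addh C _ _ _ _ d du (circ C u X) (circ C u Y)))).
      { apply pk_fhom. etransitivity; [symmetry; apply (pk_cast eq_refl (eqC u X Y d))|]. apply f_equal. apply eqhC. }
      rewrite <- (ps_addh F HS _ _ _ _ d du _ _ (ps_add F HS _ _ d) (ps_add F HS _ _ du)).
      symmetry; apply pk_cast.
  - split; [|split; [|split; [|split; [|split; [|split]]]]].
    + split; intros; [apply Fid | apply Fc].
    + intros; reflexivity.
    + intros u X e. apply cast_refl.
    + reflexivity.
    + intros X Y H. exact H.
    + intros; reflexivity.
    + intros X Y X' Y' d d' dG dG' f g e1 e2. rewrite cast_refl.
      destruct (proof_irrelevance _ d dG), (proof_irrelevance _ d' dG').
      cbn [addh fhom Ifun idm ecat pem FstarC FstarEM FstarCat].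
      apply (@pk_to_eq D). etransitivity; [|symmetry; apply pk_cast].
      etransitivity; [symmetry; apply (pk_cast (ps_add F HS _ _ d) (ps_add F HS _ _ d'))|].
      apply f_equal. apply ps_addh.
  - intros ES. split.
    { split; intros; reflexivity. }
    assert (ch : forall Y : Ob D, {X : Ob C & {f : Hom D (fob F X) Y &
               {g : Hom D Y (fob F X) | comp g f = idm (fob F X) /\ comp f g = idm Y}}}).
    { intro Y. destruct (constructive_indefinite_description _ (ES Y)) as [X HX].
      destruct (constructive_indefinite_description _ HX) as [f Hf].
      destruct (constructive_indefinite_description _ Hf) as [g Hg].
      exists X, f, g. exact Hg. }
    set (X_ := fun Y => projT1 (ch Y)).
    set (f_ := fun Y => projT1 (projT2 (ch Y)) : Hom D (fob F (X_ Y)) Y).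
    set (g_ := fun Y => proj1_sig (projT2 (projT2 (ch Y))) : Hom D Y (fob F (X_ Y))).
    assert (gf : forall Y, comp (g_ Y) (f_ Y) = idm (fob F (X_ Y)))
      by (intro Y; exact (proj1 (proj2_sig (projT2 (projT2 (ch Y)))))).
    assert (fg : forall Y, comp (f_ Y) (g_ Y) = idm Y)
      by (intro Y; exact (proj2 (proj2_sig (projT2 (projT2 (ch Y)))))).
    clearbody X_ f_ g_.
    exists (@Build_Functor D (FstarC HS) X_
              (fun Y Y' h => (comp (g_ Y') (comp h (f_ Y)) : Hom (FstarC HS) (X_ Y) (X_ Y')))).
    split; [|split].
    + split.
      * intros Y. cbn. rewrite cl. apply gf.
      * intros Y1 Y2 Y3 h2 h1. cbn. rewrite !ca.
        rewrite <- (ca _ _ _ _ _ (f_ Y2) (g_ Y2)), fg, cr. reflexivity.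
    + exists (fun X => (f_ (fob F X) : Hom (FstarC HS) (X_ (fob F X)) X)). split.
      * intros X. exists (g_ (fob F X)). split; [apply gf | apply fg].
      * intros X Y h. cbn. rewrite ca, fg, cl. reflexivity.
    + exists (fun Y => f_ Y). split.
      * intros Y. exists (g_ Y). split; [apply gf | apply fg].
      * intros X Y h. cbn. rewrite ca, fg, cl. reflexivity.
  - revert HS. destruct F. intros. reflexivity.
Qed.
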